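(* Let $n\ge1$ be an integer and let $\phi:[0,\infty)\to(0,\infty)$ be differentiable and decreasing with $\phi(r)\to0$ as $r\to\infty$. Define $\widetilde\phi(r)=\min_{\delta>0}\big(\delta+\delta^{-2n}\phi(\delta^{2n+1}r)\big)$ for $r>0$, and let $t(r)$ be the unique solution $t$ of $t/\phi(t)=r$. Then $t(r)$ is differentiable and strictly increasing to $+\infty$, and $$\phi(t(r))^{\frac1{2n+1}}\le\widetilde\phi(r)\le 2\,\phi(t(r))^{\frac1{2n+1}},\qquad r>0.$$ *)

(* Defs.v *)
From Stdlib Require Import Reals.
From Coquelicot Require Import Coquelicot.
Open Scope R_scope.

Definition phi_obj (n : nat) (phi : R -> R) (r delta : R) : R :=
  delta + phi (delta ^ (2 * n + 1) * r) / delta ^ (2 * n).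

(* phi-tilde(r) = inf over delta > 0 of phi_obj (the statement's "min";
   attainment of the infimum is part of the theorem's conclusion). *)
Definition phitilde (n : nat) (phi : R -> R) (r : R) : R :=
  real (Glb_Rbar (fun v => exists delta, 0 < delta /\ v = phi_obj n phi r delta)).

(* Main.v *)
Require Import Defs.
From Stdlib Require Import Reals Lra Lia Ranalysis5.
From Coquelicot Require Import Coquelicot.
Open Scope R_scope.
Section S.
Variable phi : R -> R.
Hypothesis hpos : forall x, 0 <= x -> 0 < phi x.
Hypothesis hder : forall x, 0 < x -> ex_derive phi x.
Hypothesis hdec : forall x y, 0 <= x -> x <= y -> phi y <= phi x.

Definition gg (s : R) := s / phi s.

Lemma gg_incr s1 s2 : 0 <= s1 -> s1 < s2 -> gg s1 < gg s2.
Proof.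
  intros h1 h2. unfold gg, Rdiv.
  assert (p1 := hpos s1 h1). assert (p2 : 0 < phi s2) by (apply hpos; lra).
  assert (d := hdec s1 s2 h1 (Rlt_le _ _ h2)).
  apply Rle_lt_trans with (s1 * / phi s2).
  - apply Rmult_le_compat_l; auto. apply Rinv_le_contravar; auto.
  - apply Rmult_lt_compat_r; auto. apply Rinv_0_lt_compat; auto.
Qed.

Lemma gg_le s1 s2 : 0 <= s1 -> s1 <= s2 -> gg s1 <= gg s2.
Proof.
  intros h1 h2. destruct (Req_dec s1 s2). subst; lra.
  left; apply gg_incr; lra.
Qed.

Lemma gg_inj s1 s2 : 0 <= s1 -> 0 <= s2 -> gg s1 = gg s2 -> s1 = s2.
Proof.
  intros h1 h2 e. destruct (Rtotal_order s1 s2) as [h|[h|h]]; auto.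
  - apply gg_incr in h; lra.
  - apply gg_incr in h; lra.
Qed.

Lemma phi_der_nonpos x l : 0 < x -> derivable_pt_lim phi x l -> l <= 0.
Proof.
  intros hx H. destruct (Rle_lt_dec l 0) as [h|h]; auto.
  destruct (H l h) as [d Hd].
  assert (hd := cond_pos d).
  specialize (Hd (d/2)). 
  assert (q : d/2 <> 0) by lra.
  assert (q2 : Rabs (d/2) < d) by (rewrite Rabs_pos_eq; lra).
  specialize (Hd q q2).
  assert (hh := hdec x (x + d/2) ltac:(lra) ltac:(lra)).
  assert ((phi (x + d / 2) - phi x) / (d / 2) <= 0).
  { unfold Rdiv. apply Rmult_le_0_r. lra. left; apply Rinv_0_lt_compat; lra. }
  rewrite Rabs_left1 in Hd; lra.
Qed.

Lemma gg_deriv x : 0 < x -> exists l, 0 < l /\ derivable_pt_lim gg x l.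
Proof.
  intros hx. destruct (hder x hx) as [l Hl].
  apply is_derive_Reals in Hl.
  assert (hl := phi_der_nonpos x l hx Hl).
  assert (p := hpos x ltac:(lra)).
  exists ((1 * phi x - l * x) / (phi x)²). split.
  - apply Rdiv_lt_0_compat. nra. unfold Rsqr; nra.
  - apply (derivable_pt_lim_div id phi x 1 l (derivable_pt_lim_id x) Hl). lra.
Qed.

Lemma gg_cont x : 0 < x -> continuity_pt gg x.
Proof.
  intros hx. destruct (gg_deriv x hx) as [l [_ H]].
  apply derivable_continuous_pt. exists l. exact H.
Qed.

Lemma t_ex r : 0 < r -> {s | 0 < s /\ gg s = r}.
Proof.
  intros hr.
  assert (p0 := hpos 0 (Rle_refl 0)). assert (p1 := hpos 1 ltac:(lra)).
  set (e := Rmin 1 (r * phi 1 / 2)).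
  assert (he : 0 < e) by (apply Rmin_pos; [lra| apply Rdiv_lt_0_compat; nra]).
  assert (he1 : e <= 1) by apply Rmin_l.
  assert (he2 : e <= r * phi 1 / 2) by apply Rmin_r.
  set (M := r * phi 0 + 1).
  assert (hM : 0 < M) by (unfold M; nra).
  assert (d1 := hdec 1 0). 
  assert (pe : phi 1 <= phi e) by (apply hdec; lra).
  assert (pe0 := hpos e ltac:(lra)).
  assert (pM : phi M <= phi 0) by (apply hdec; lra).
  assert (pM0 := hpos M ltac:(lra)).
  destruct (IVT_Rbar_incr gg e M (gg e) (gg M) r) as [s [hs1 [hs2 hs3]]].
  - apply is_lim_continuity, gg_cont; auto.
  - apply is_lim_continuity, gg_cont; auto.
  - intros x h1 h2. simpl in *. apply gg_cont; lra.
  - simpl. unfold M. assert (r * phi 1 <= r * phi 0) by (apply Rmult_le_compat_l; [lra| apply hdec; lra]). lra.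
  - simpl. unfold gg. split.
    + apply Rlt_div_l; auto. assert (r * phi 1 <= r * phi e) by (apply Rmult_le_compat_l; lra). nra.
    + apply Rlt_div_r; auto. assert (r * phi M <= r * phi 0) by (apply Rmult_le_compat_l; lra). unfold M at 2. lra.
  - exists s. simpl in *. split; auto. lra.
Qed.

Definition tt (r : R) : R :=
  match Rlt_dec 0 r with left H => proj1_sig (t_ex r H) | right _ => 0 end.

Lemma tt_spec r : 0 < r -> 0 < tt r /\ gg (tt r) = r.
Proof.
  intros hr. unfold tt. destruct (Rlt_dec 0 r); [|lra].
  destruct (t_ex r r0) as [s hs]. simpl. exact hs.
Qed.

Lemma tt_incr r1 r2 : 0 < r1 -> r1 < r2 -> tt r1 < tt r2.
Proof.
  intros h1 h2. destruct (tt_spec r1 h1) as [a1 b1]. destruct (tt_spec r2 ltac:(lra)) as [a2 b2].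
  destruct (Rlt_le_dec (tt r1) (tt r2)) as [h|h]; auto.
  apply gg_le in h; lra.
Qed.

Lemma tt_le r1 r2 : 0 < r1 -> r1 <= r2 -> tt r1 <= tt r2.
Proof.
  intros h1 h2. destruct (Req_dec r1 r2). subst; lra. left; apply tt_incr; lra.
Qed.

Lemma tt_deriv r : 0 < r -> ex_derive tt r.
Proof.
  intros hr. destruct (tt_spec r hr) as [a b].
  set (lb := tt r / 2). set (ub := tt r + 1).
  assert (hlb : 0 < lb) by (unfold lb; lra).
  assert (glb : 0 < gg lb) by (unfold gg; apply Rdiv_lt_0_compat; auto; apply hpos; lra).
  apply ex_derive_Reals_1.
  assert (fd : forall a : R, lb <= a <= ub -> derivable_pt gg a).
  { intros x hx. apply ex_derive_Reals_0. destruct (gg_deriv x ltac:(lra)) as [l [_ hl]]. exists l; apply is_derive_Reals; exact hl. }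
  assert (ord : lb < ub) by (unfold lb, ub; lra).
  assert (xe : gg lb < r < gg ub).
  { rewrite <- b. split; apply gg_incr; unfold lb, ub; lra. }
  assert (gwf : forall x, gg lb <= x -> x <= gg ub -> lb <= tt x <= ub).
  { intros x h1 h2. destruct (tt_spec x ltac:(lra)) as [c d].
    split.
    - destruct (Rle_lt_dec lb (tt x)) as [h|h]; auto. apply gg_incr in h; lra.
    - destruct (Rle_lt_dec (tt x) ub) as [h'|h']; auto. apply gg_incr in h'; lra. }
  apply (derivable_pt_recip_interv gg tt lb ub r ord xe) with (g_wf := gwf) (f_derivable := fd).
  - intros x h1 h2. unfold comp, id. apply tt_spec. lra.
  - intros x y h1 h2 h3. apply gg_incr; lra.
  - destruct (gg_deriv (tt r) a) as [l [hl Hl]].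
    rewrite (derive_pt_eq_0 _ _ _ _ Hl). lra.
Qed.

Lemma tt_lim : is_lim tt p_infty p_infty.
Proof.
  apply is_lim_spec. intros M. simpl.
  set (M' := Rmax M 1).
  assert (h1 : 1 <= M') by apply Rmax_r. assert (h2 : M <= M') by apply Rmax_l.
  exists (Rmax 1 (gg M')). intros x hx.
  assert (hx1 : 1 < x) by (eapply Rle_lt_trans; [apply Rmax_l| exact hx]).
  assert (hx2 : gg M' < x) by (eapply Rle_lt_trans; [apply Rmax_r| exact hx]).
  destruct (tt_spec x ltac:(lra)) as [a b].
  destruct (Rle_lt_dec (tt x) M') as [h|h]; [|lra].
  apply gg_le in h; lra.
Qed.

End S.

Lemma pow_le_one' (d : R) (k : nat) : 0 <= d -> d <= 1 -> d ^ k <= 1.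
Proof. intros h1 h2. rewrite <- (pow1 k). apply pow_incr; lra. Qed.

Section T.
Variable n : nat.
Variable phi : R -> R.
Hypothesis hn : (1 <= n)%nat.
Hypothesis hpos : forall x, 0 <= x -> 0 < phi x.
Hypothesis hder : forall x, 0 < x -> ex_derive phi x.
Hypothesis hdec : forall x y, 0 <= x -> x <= y -> phi y <= phi x.

Lemma obj_cont r d : 0 < r -> 0 < d -> continuity_pt (phi_obj n phi r) d.
Proof.
  intros hr hd. apply continuity_pt_filterlim.
  apply (ex_derive_continuous (phi_obj n phi r)).
  unfold phi_obj. auto_derive. split; [|split; auto].
  - apply hder. replace (n + (n + 0) + 1)%nat with (2 * n + 1)%nat by lia.
    apply Rmult_lt_0_compat; auto. apply pow_lt; auto.
  - apply pow_nonzero; lra.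
Qed.

Lemma obj_pos r d : 0 < r -> 0 < d -> d < phi_obj n phi r d.
Proof.
  intros hr hd. unfold phi_obj.
  assert (0 < phi (d ^ (2 * n + 1) * r) / d ^ (2 * n)).
  { apply Rdiv_lt_0_compat. apply hpos. apply Rmult_le_pos; [apply pow_le|]; lra.
    apply pow_lt; auto. }
  lra.
Qed.

Lemma obj_small r d : 0 < r -> 0 < d -> d <= 1 -> phi r / d <= phi_obj n phi r d.
Proof.
  intros hr hd hd1.
  assert (hm : d ^ (2 * n) <= d).
  { replace (2 * n)%nat with (S (2 * n - 1)) by lia. rewrite <- tech_pow_Rmult.
    assert (d ^ (2 * n - 1) <= 1) by (apply pow_le_one'; lra).
    assert (0 <= d ^ (2 * n - 1)) by (apply pow_le; lra). nra. }
  assert (hm0 : 0 < d ^ (2 * n)) by (apply pow_lt; auto).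
  assert (hN : d ^ (2 * n + 1) * r <= r).
  { assert (d ^ (2 * n + 1) <= 1) by (apply pow_le_one'; lra). nra. }
  assert (hph : phi r <= phi (d ^ (2 * n + 1) * r)).
  { apply hdec; auto. apply Rmult_le_pos; [apply pow_le|]; lra. }
  assert (pr := hpos r ltac:(lra)).
  unfold phi_obj.
  assert (phi r / d <= phi (d ^ (2 * n + 1) * r) / d ^ (2 * n)).
  { unfold Rdiv. apply Rle_trans with (phi r * / d ^ (2 * n)).
    - apply Rmult_le_compat_l; [lra|]. apply Rinv_le_contravar; auto.
    - apply Rmult_le_compat_r; auto. left; apply Rinv_0_lt_compat; auto. }
  lra.
Qed.

Lemma obj_min r : 0 < r -> exists d, 0 < d /\
   forall d', 0 < d' -> phi_obj n phi r d <= phi_obj n phi r d'.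
Proof.
  intros hr.
  set (C := phi_obj n phi r 1).
  assert (hC : 1 < C) by (apply obj_pos; lra).
  assert (pr := hpos r ltac:(lra)).
  set (e := Rmin (1/2) (phi r / (C + 1))).
  assert (he : 0 < e) by (apply Rmin_pos; [lra | apply Rdiv_lt_0_compat; lra]).
  assert (he1 : e <= 1/2) by apply Rmin_l.
  assert (he2 : e <= phi r / (C + 1)) by apply Rmin_r.
  destruct (continuity_ab_min (phi_obj n phi r) e (C + 1)) as [d [Hd Hdi]].
  - lra.
  - intros c hc. apply obj_cont; lra.
  - exists d. split; [lra|].
    assert (hdC : phi_obj n phi r d <= C) by (apply Hd; lra).
    intros d' hd'.
    destruct (Rle_lt_dec d' e) as [h1|h1].
    + assert (phi r / d' <= phi_obj n phi r d') by (apply obj_small; lra).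
      assert (C + 1 <= phi r / d').
      { apply Rle_div_r; auto.
        apply Rle_div_r in he2; [|lra].
        assert ((C + 1) * d' <= (C + 1) * e) by (apply Rmult_le_compat_l; lra). lra. }
      lra.
    + destruct (Rle_lt_dec d' (C + 1)) as [h2|h2].
      * apply Hd; lra.
      * assert (d' < phi_obj n phi r d') by (apply obj_pos; lra). lra.
Qed.

End T.

Theorem lemma2 (n : nat) (phi : R -> R)
  (hn : (1 <= n)%nat)
  (hpos : forall x, 0 <= x -> 0 < phi x)
  (hder : forall x, 0 < x -> ex_derive phi x)
  (hder0 : exists l : R,
      filterlim (fun h => (phi h - phi 0) / h) (at_right 0) (locally l))
  (hdec : forall x y, 0 <= x -> x <= y -> phi y <= phi x)
  (hlim : is_lim phi p_infty 0) :
  (* the infimum defining phi-tilde is a minimum *)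
  (forall r, 0 < r -> exists delta, 0 < delta /\
      (forall delta', 0 < delta' -> phi_obj n phi r delta <= phi_obj n phi r delta') /\
      phitilde n phi r = phi_obj n phi r delta) /\
  exists t : R -> R,
    (* t(r) is the unique solution t >= 0 of t / phi(t) = r *)
    (forall r, 0 < r -> 0 <= t r /\ t r / phi (t r) = r) /\
    (forall r s, 0 < r -> 0 <= s -> s / phi s = r -> s = t r) /\
    (* t is differentiable and strictly increasing to +oo *)
    (forall r, 0 < r -> ex_derive t r) /\
    (forall r1 r2, 0 < r1 -> r1 < r2 -> t r1 < t r2) /\
    is_lim t p_infty p_infty /\
    (* the two-sided estimate *)
    (forall r, 0 < r ->
       Rpower (phi (t r)) (/ INR (2 * n + 1)) <= phitilde n phi r /\
       phitilde n phi r <= 2 * Rpower (phi (t r)) (/ INR (2 * n + 1))).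
Proof.
  assert (MIN : forall r, 0 < r -> exists delta, 0 < delta /\
      (forall delta', 0 < delta' -> phi_obj n phi r delta <= phi_obj n phi r delta') /\
      phitilde n phi r = phi_obj n phi r delta).
  { intros r hr. destruct (obj_min n phi hn hpos hder hdec r hr) as [d [hd Hd]].
    exists d. split; auto. split; auto.
    unfold phitilde. rewrite (is_glb_Rbar_unique _ (Finite (phi_obj n phi r d))); auto.
    split.
    - intros v [d' [hd' ->]]. simpl. apply Hd; auto.
    - intros b Hb. apply Hb. exists d; auto. }
  split; auto.
  exists (tt phi hpos hder hdec).
  set (t := tt phi hpos hder hdec).
  assert (TS : forall r, 0 < r -> 0 < t r /\ gg phi (t r) = r) by (intros; apply tt_spec; auto).
  split; [intros r hr; destruct (TS r hr); split; [lra| auto]|].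
  split.
  { intros r s hr hs e. destruct (TS r hr) as [a b].
    apply (gg_inj phi hpos hdec); auto; [lra|]. rewrite b. exact e. }
  split; [intros; apply tt_deriv; auto|].
  split; [intros; apply tt_incr; auto|].
  split; [apply tt_lim|].
  intros r hr. destruct (TS r hr) as [ta tb].
  unfold gg in tb.
  assert (pt := hpos (t r) ltac:(lra)).
  assert (tr : t r = r * phi (t r)).
  { assert (E : t r = t r / phi (t r) * phi (t r)) by (field; lra).
    rewrite tb in E. exact E. }
  set (N := (2 * n + 1)%nat).
  set (a := Rpower (phi (t r)) (/ INR N)).
  assert (ha : 0 < a) by (unfold a, Rpower; apply exp_pos).
  assert (hN : INR N <> 0) by (apply not_0_INR; unfold N; lia).
  assert (aN : a ^ N = phi (t r)).
  { rewrite <- Rpower_pow; auto. unfold a. rewrite Rpower_mult.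
    rewrite Rinv_l; auto. apply Rpower_1; auto. }
  assert (aN2 : a ^ N = a * a ^ (2 * n)).
  { unfold N. rewrite Nat.add_1_r. reflexivity. }
  destruct (MIN r hr) as [d [hd [Hd ->]]].
  split.
  - destruct (Rlt_le_dec d a) as [h|h].
    + unfold phi_obj.
      assert (hm0 : 0 < d ^ (2 * n)) by (apply pow_lt; auto).
      assert (dN : d ^ N * r <= t r).
      { rewrite tr, <- aN. rewrite Rmult_comm. apply Rmult_le_compat_l; [lra|].
        apply pow_incr; lra. }
      assert (ph : phi (t r) <= phi (d ^ N * r)).
      { apply hdec; auto. apply Rmult_le_pos; [apply pow_le|]; lra. }
      assert (dm : d ^ (2 * n) <= a ^ (2 * n)) by (apply pow_incr; lra).
      assert (a * d ^ (2 * n) <= phi (d ^ N * r)).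
      { rewrite <- aN, aN2 in ph. nra. }
      assert (a <= phi (d ^ (2 * n + 1) * r) / d ^ (2 * n)).
      { apply Rle_div_r; auto. }
      lra.
    + assert (d < phi_obj n phi r d) by (apply obj_pos; auto; lia). lra.
  - apply Rle_trans with (phi_obj n phi r a); [apply Hd; auto|].
    unfold phi_obj. fold N.
    assert (a ^ N * r = t r) by (rewrite aN, Rmult_comm; symmetry; exact tr).
    rewrite H, <- aN, aN2.
    assert (0 < a ^ (2 * n)) by (apply pow_lt; auto).
    right. field. lra.
Qed.
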